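(* Let $E$ be a Boolean algebra of propositions, $E_0=E\setminus\{0\}$, let $T$ be a commutative algebra with identity over $\mathbb{R}$ containing $\mathbb{R}$ (an algebra of unknown real numbers), and let $PV:T\times E_0\to\mathbb{R}$ be a plausible value function satisfying: (a) for all $a,b\in\mathbb{R}$, $X\in T$, $C\in E_0$: $PV(aX+b|C)=aPV(X|C)+b$; (b) for each fixed $Y\in T$ and $A\in E_0$, the value $PV(X+Y|A)$ depends only on $PV(X|A)$ (i.e. $PV(X|A)=PV(X'|A)$ implies $PV(X+Y|A)=PV(X'+Y|A)$). Then for all $X,Y\in T$ and $A\in E_0$, $$PV(X+Y|A)=PV(X|A)+PV(Y|A).$$ *)

(* Defs.v *)
From HB Require Import structures.
From mathcomp Require Import all_boot all_order all_algebra.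
From mathcomp Require Import reals.
Set Implicit Arguments. Unset Strict Implicit. Unset Printing Implicit Defensive.

(* Main.v *)
Require Import Defs.
From HB Require Import structures.
From mathcomp Require Import all_boot all_order all_algebra.
From mathcomp Require Import reals.
Import Order.TTheory GRing.Theory Num.Theory.
Local Open Scope ring_scope.

(* PV : T -> E -> R, only meaningful on E_0. *)
Theorem mainTheorem4 (R : realType) (d : Order.disp_t)
  (E : ctbDistrLatticeType d) (T : comAlgType R) (PV : T -> E -> R)
  (Ha : forall (a b : R) (X : T) (C : E), C != \bot%O ->
          PV (a *: X + b%:A) C = a * PV X C + b)
  (Hb : forall (Y : T) (A : E) (X X' : T), A != \bot%O ->
          PV X A = PV X' A -> PV (X + Y) A = PV (X' + Y) A) :
  forall (X Y : T) (A : E), A != \bot%O -> PV (X + Y) A = PV X A + PV Y A.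
Proof.
move=> X Y A hA.
have hc : PV ((PV X A)%:A) A = PV X A.
  by have := Ha 0 (PV X A) X A hA; rewrite scale0r add0r mul0r add0r.
rewrite (Hb Y A X ((PV X A)%:A) hA (esym hc)) addrC.
have := Ha 1 (PV X A) Y A hA; rewrite scale1r mul1r => ->.
by rewrite addrC.
Qed.
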